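(* Let $\mathcal{A}\in\mathbb{R}^{m\times m\times n}$ be $(1,2)$-symmetric and nonnegative with $$\mathcal{A}=\begin{pmatrix}\mathcal{A}_1&0\\0&\mathcal{A}_2\end{pmatrix},\qquad \mathcal{A}_i\in\mathbb{R}^{m_i\times m_i\times n},\ i=1,2,\quad m_1+m_2=m,$$ where $\mathcal{A}_1$ and $\mathcal{A}_2$ are irreducible. For a $(1,2)$-symmetric tensor $\mathcal{B}\in\mathbb{R}^{k\times k\times n}$ let $$\varphi(\mathcal{B})=\min\{\|\mathcal{B}-(X,X,Z)\cdot\mathcal{H}\|^2:\ X\in\mathbb{R}^{k\times 2},X^TX=I_2,\ Z\in\mathbb{R}^{n\times 2},Z^TZ=I_2,\ \mathcal{H}\in\mathbb{R}^{2\times2\times2}\}.$$ Assume $\varphi(\mathcal{A})<\varphi(\mathcal{A}_1)+\|\mathcal{A}_2\|^2$ and $\varphi(\mathcal{A})<\varphi(\mathcal{A}_2)+\|\mathcal{A}_1\|^2$, and that the solution $(U,U,W)$ of the $(1,2)$-symmetric best rank-$(2,2,2)$ approximation problem for $\mathcal{A}$, with core $\mathcal{F}=\mathcal{A}\cdot(U,U,W)$, is unique. Then a representative of the solution satisfies $$U=\begin{pmatrix}u_1&0\\0&u_2\end{pmatrix},\qquad u_1\in\mathbb{R}^{m_1},\ u_2\in\mathbb{R}^{m_2},$$ and all 3-slices $\mathcal{F}(:,:,k)$ of the corresponding core tensor are diagonal $2\times2$ matrices. The corresponding result holds for the best rank-$(2,2,1)$ approximation (with $W$ replaced by a single unit vector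 $w$ and $Z\in\mathbb{R}^{n\times1}$, $\mathcal{H}\in\mathbb{R}^{2\times2\times1}$ in the definition of $\varphi$).
   Context: A tensor $\mathcal{A}\in\mathbb{R}^{m\times m\times n}$ is $(1,2)$-symmetric if $\mathcal{A}(i,j,k)=\mathcal{A}(j,i,k)$ for all $i,j,k$. It is (1,2)-reducible if there exist a nonempty proper subset $I\subset\{1,\dots,m\}$ and a nonempty $K\subseteq\{1,\dots,n\}$ with $a_{ijk}=a_{jik}=0$ for all $i\in I,j\notin I,k\in K$; 3-reducible if $a_{ijk}=0$ for all $i,j\in I$, $k\in K$; reducible if either holds; irreducible otherwise. Multilinear multiplication: $(X,Y,Z)\cdot\mathcal{H}$ has entries $\sum_{\alpha,\beta,\gamma}x_{i\alpha}y_{j\beta}z_{k\gamma}h_{\alpha\beta\gamma}$, and $\mathcal{A}\cdot(X,Y,Z):=(X^T,Y^T,Z^T)\cdot\mathcal{A}$. Norm is Frobenius. The $(1,2)$-symmetric best rank-$(r_1,r_1,r_3)$ approximation problem is $\max\|\mathcal{A}\cdot(X,X,Z)\|$ over $X^TX=I_{r_1}$, $Z^TZ=I_{r_3}$ (equivalently minimizing $\|\mathcal{A}-(X,X,Z)\cdot\mathcal{H}\|$), with solution $(U,U,W)$ and core $\mathcal{F}=\mathcal{A}\cdot(U,U,W)$. Solutions are equivalence classes under $(U,U,W)\mapsto(UQ_1,UQ_1,WQ_3)$, $Q_1,Q_3$ orthogonal; uniqueness means uniqueness of the class. *)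

(* Defs.v *)
From HB Require Import structures.
From mathcomp Require Import all_boot all_order all_algebra.
From mathcomp Require Import classical_sets reals.
Set Implicit Arguments. Unset Strict Implicit. Unset Printing Implicit Defensive.
Import Order.TTheory GRing.Theory Num.Theory.
Local Open Scope ring_scope.


Definition tensor (R : Type) (a b c : nat) := 'I_a -> 'I_b -> 'I_c -> R.

Section Tensors.
Variable R : realType.

Definition mmul (a b c p q r : nat) (X : 'M[R]_(a, p)) (Y : 'M[R]_(b, q))
  (Z : 'M[R]_(c, r)) (H : tensor R p q r) : tensor R a b c :=
  fun i j k => \sum_(al < p) \sum_(be < q) \sum_(ga < r)
                 X i al * Y j be * Z k ga * H al be ga.

Definition contract (a b c p q r : nat) (A : tensor R a b c)
  (X : 'M[R]_(a, p)) (Y : 'M[R]_(b, q)) (Z : 'M[R]_(c, r)) : tensor R p q r :=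
  mmul X^T Y^T Z^T A.

Definition tsub (a b c : nat) (A B : tensor R a b c) : tensor R a b c :=
  fun i j k => A i j k - B i j k.

Definition sqnorm (a b c : nat) (A : tensor R a b c) : R :=
  \sum_(i < a) \sum_(j < b) \sum_(k < c) A i j k ^+ 2.
Definition frob (a b c : nat) (A : tensor R a b c) : R := Num.sqrt (sqnorm A).

Definition sym12 (m n : nat) (A : tensor R m m n) : Prop :=
  forall i j k, A i j k = A j i k.

Definition nonneg (a b c : nat) (A : tensor R a b c) : Prop :=
  forall i j k, 0 <= A i j k.

Definition reducible12 (m n : nat) (A : tensor R m m n) : Prop :=
  exists (I : {set 'I_m}) (K : {set 'I_n}),
    [/\ I != finset.set0, I != [set: 'I_m], K != finset.set0 &
      forall i j k, i \in I -> j \notin I -> k \in K ->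
        A i j k = 0 /\ A j i k = 0].

Definition reducible3 (m n : nat) (A : tensor R m m n) : Prop :=
  exists (I : {set 'I_m}) (K : {set 'I_n}),
    [/\ I != finset.set0, I != [set: 'I_m], K != finset.set0 &
      forall i j k, i \in I -> j \in I -> k \in K -> A i j k = 0].

Definition reducible (m n : nat) (A : tensor R m m n) : Prop :=
  reducible12 A \/ reducible3 A.

Definition irreducible (m n : nat) (A : tensor R m m n) : Prop :=
  ~ reducible A.

Definition blockT (m1 m2 n : nat) (A1 : tensor R m1 m1 n) (A2 : tensor R m2 m2 n)
  : tensor R (m1 + m2) (m1 + m2) n :=
  fun i j k => match split i, split j with
               | inl i', inl j' => A1 i' j' k
               | inr i', inr j' => A2 i' j' k
               | _, _ => 0
               end.

Definition orthonormal (a r : nat) (X : 'M[R]_(a, r)) : Prop :=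
  X^T *m X = 1%:M.

Definition phi (r3 k n : nat) (B : tensor R k k n) : R :=
  inf (fun x : R => exists (X : 'M[R]_(k, 2)) (Z : 'M[R]_(n, r3))
                          (H : tensor R 2 2 r3),
         [/\ orthonormal X, orthonormal Z & x = sqnorm (tsub B (mmul X X Z H))]).

Definition is_solution (r1 r3 m n : nat) (A : tensor R m m n)
  (U : 'M[R]_(m, r1)) (W : 'M[R]_(n, r3)) : Prop :=
  [/\ orthonormal U, orthonormal W &
    forall (X : 'M[R]_(m, r1)) (Z : 'M[R]_(n, r3)),
      orthonormal X -> orthonormal Z ->
      frob (contract A X X Z) <= frob (contract A U U W)].

Definition unique_solution (r1 r3 m n : nat) (A : tensor R m m n) : Prop :=
  (exists U W, @is_solution r1 r3 m n A U W) /\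
  forall U W U' W', @is_solution r1 r3 m n A U W -> @is_solution r1 r3 m n A U' W' ->
    exists (Q1 : 'M[R]_r1) (Q3 : 'M[R]_r3),
      [/\ orthonormal Q1, orthonormal Q3, U' = U *m Q1 & W' = W *m Q3].

End Tensors.

(* Main.v *)
Require Import Defs.
From HB Require Import structures.
From mathcomp Require Import all_boot all_order all_algebra.
From mathcomp Require Import boolp classical_sets reals ring lra.
Import Order.TTheory GRing.Theory Num.Theory.
Local Open Scope ring_scope.
Set Implicit Arguments. Unset Strict Implicit.

Section Aux.
Variable R : realType.

Definition tsum (a b c : nat) (F : 'I_a -> 'I_b -> 'I_c -> R) : R :=
  \sum_(i < a) \sum_(j < b) \sum_(k < c) F i j k.

Lemma tsum_ext a b c (F G : 'I_a -> 'I_b -> 'I_c -> R) :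
  (forall i j k, F i j k = G i j k) -> tsum F = tsum G.
Proof. by move=> H; apply eq_bigr=> i _; apply eq_bigr=> j _; apply eq_bigr. Qed.

Lemma tsumD a b c (F G : 'I_a -> 'I_b -> 'I_c -> R) :
  tsum (fun i j k => F i j k + G i j k) = tsum F + tsum G.
Proof.
rewrite /tsum -big_split; apply eq_bigr=> i _; rewrite -big_split.
by apply eq_bigr=> j _; rewrite -big_split.
Qed.

Lemma tsumZ a b c (x : R) (F : 'I_a -> 'I_b -> 'I_c -> R) :
  tsum (fun i j k => x * F i j k) = x * tsum F.
Proof.
rewrite /tsum mulr_sumr; apply eq_bigr=> i _; rewrite mulr_sumr.
by apply eq_bigr=> j _; rewrite mulr_sumr.
Qed.

Lemma tsumN a b c (F : 'I_a -> 'I_b -> 'I_c -> R) :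
  tsum (fun i j k => - F i j k) = - tsum F.
Proof.
rewrite /tsum -sumrN; apply eq_bigr=> i _; rewrite -sumrN.
by apply eq_bigr=> j _; rewrite -sumrN.
Qed.

Definition inner a b c (A B : tensor R a b c) := tsum (fun i j k => A i j k * B i j k).

Lemma sqnormE a b c (A : tensor R a b c) : sqnorm A = inner A A.
Proof. by apply tsum_ext=> i j k; rewrite expr2. Qed.

Lemma innerC a b c (A B : tensor R a b c) : inner A B = inner B A.
Proof. by apply tsum_ext=> i j k; rewrite mulrC. Qed.

Lemma sqnorm_ge0 a b c (A : tensor R a b c) : 0 <= sqnorm A.
Proof. by do 3 (apply sumr_ge0=> ? _); apply sqr_ge0. Qed.

Lemma sqnorm_sub a b c (A B : tensor R a b c) :
  sqnorm (tsub A B) = sqnorm A - 2 * inner A B + sqnorm B.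
Proof.
rewrite !sqnormE /inner -tsumZ -tsumN -!tsumD.
by apply tsum_ext=> i j k; rewrite /tsub; ring.
Qed.

Definition md1 p a q r (X : 'M[R]_(p, a)) (H : tensor R a q r) : tensor R p q r :=
  fun i b c => \sum_(x < a) X i x * H x b c.
Definition md2 p a q r (Y : 'M[R]_(q, a)) (H : tensor R p a r) : tensor R p q r :=
  fun i b c => \sum_(x < a) Y b x * H i x c.
Definition md3 p a q r (Z : 'M[R]_(r, a)) (H : tensor R p q a) : tensor R p q r :=
  fun i b c => \sum_(x < a) Z c x * H i b x.

Lemma mmul_md a b c p q r (X : 'M[R]_(a, p)) (Y : 'M[R]_(b, q)) (Z : 'M[R]_(c, r)) H :
  mmul X Y Z H = md1 X (md2 Y (md3 Z H)).
Proof.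
apply funext=> i; apply funext=> j; apply funext=> k.
rewrite /mmul /md1 /md2 /md3; apply eq_bigr=> al _; rewrite mulr_sumr.
apply eq_bigr=> be _; rewrite !mulr_sumr; apply eq_bigr=> ga _; by rewrite !mulrA.
Qed.

Lemma md1M p a s q r (X : 'M[R]_(p, a)) (X' : 'M[R]_(a, s)) (H : tensor R s q r) :
  md1 X (md1 X' H) = md1 (X *m X') H.
Proof.
apply funext=> i; apply funext=> j; apply funext=> k; rewrite /md1.
under eq_bigr do rewrite mulr_sumr. rewrite exchange_big; apply eq_bigr=> y _.
by rewrite !mxE mulr_suml; apply eq_bigr=> x _; rewrite mulrA.
Qed.

Lemma md2M p a s q r (X : 'M[R]_(q, a)) (X' : 'M[R]_(a, s)) (H : tensor R p s r) :
  md2 X (md2 X' H) = md2 (X *m X') H.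
Proof.
apply funext=> i; apply funext=> j; apply funext=> k; rewrite /md2.
under eq_bigr do rewrite mulr_sumr. rewrite exchange_big; apply eq_bigr=> y _.
by rewrite !mxE mulr_suml; apply eq_bigr=> x _; rewrite mulrA.
Qed.

Lemma md3M p a s q r (X : 'M[R]_(r, a)) (X' : 'M[R]_(a, s)) (H : tensor R p q s) :
  md3 X (md3 X' H) = md3 (X *m X') H.
Proof.
apply funext=> i; apply funext=> j; apply funext=> k; rewrite /md3.
under eq_bigr do rewrite mulr_sumr. rewrite exchange_big; apply eq_bigr=> y _.
by rewrite !mxE mulr_suml; apply eq_bigr=> x _; rewrite mulrA.
Qed.

Lemma md12 p a q b r (X : 'M[R]_(p, a)) (Y : 'M[R]_(q, b)) (H : tensor R a b r) :
  md2 Y (md1 X H) = md1 X (md2 Y H).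
Proof.
apply funext=> i; apply funext=> j; apply funext=> k; rewrite /md1 /md2.
under eq_bigr do rewrite mulr_sumr. rewrite exchange_big; apply eq_bigr=> y _.
by rewrite mulr_sumr; apply eq_bigr=> x _; rewrite mulrCA.
Qed.

Lemma md13 p a q r c (X : 'M[R]_(p, a)) (Z : 'M[R]_(r, c)) (H : tensor R a q c) :
  md3 Z (md1 X H) = md1 X (md3 Z H).
Proof.
apply funext=> i; apply funext=> j; apply funext=> k; rewrite /md1 /md3.
under eq_bigr do rewrite mulr_sumr. rewrite exchange_big; apply eq_bigr=> y _.
by rewrite mulr_sumr; apply eq_bigr=> x _; rewrite mulrCA.
Qed.

Lemma md23 p q b r c (Y : 'M[R]_(q, b)) (Z : 'M[R]_(r, c)) (H : tensor R p b c) :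
  md3 Z (md2 Y H) = md2 Y (md3 Z H).
Proof.
apply funext=> i; apply funext=> j; apply funext=> k; rewrite /md2 /md3.
under eq_bigr do rewrite mulr_sumr. rewrite exchange_big; apply eq_bigr=> y _.
by rewrite mulr_sumr; apply eq_bigr=> x _; rewrite mulrCA.
Qed.

Lemma mmulM a b c p q r s t u (X : 'M[R]_(a, p)) (Y : 'M[R]_(b, q)) (Z : 'M[R]_(c, r))
  (X' : 'M[R]_(p, s)) (Y' : 'M[R]_(q, t)) (Z' : 'M[R]_(r, u)) H :
  mmul X Y Z (mmul X' Y' Z' H) = mmul (X *m X') (Y *m Y') (Z *m Z') H.
Proof.
rewrite !mmul_md md13 md12 md1M md23 md2M md3M //.
Qed.

Lemma sum_id n (i : 'I_n) (F : 'I_n -> R) : \sum_(x < n) (1%:M : 'M[R]_n) i x * F x = F i.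
Proof.
rewrite (bigD1 i) //= big1 ?addr0 => [|x Hx]; first by rewrite mxE eqxx mul1r.
by rewrite mxE eq_sym (negbTE Hx) mul0r.
Qed.

Lemma sum_diag n (v : 'rV[R]_n) (i : 'I_n) (F : 'I_n -> R) :
  \sum_(x < n) diag_mx v i x * F x = v 0 i * F i.
Proof.
rewrite (bigD1 i) //= big1 ?addr0 => [|x Hx]; first by rewrite mxE eqxx mulr1n.
by rewrite mxE eq_sym (negbTE Hx) mulr0n mul0r.
Qed.

Lemma mmul1 a b c (H : tensor R a b c) : mmul 1%:M 1%:M 1%:M H = H.
Proof.
apply funext=> i; apply funext=> j; apply funext=> k.
by rewrite mmul_md /md1 /md2 /md3 sum_id sum_id sum_id.
Qed.

Lemma adj1 p a q r (X : 'M[R]_(p, a)) (H : tensor R a q r) B :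
  inner (md1 X H) B = inner H (md1 X^T B).
Proof.
rewrite /inner /tsum /md1.
under eq_bigr do under eq_bigr do under eq_bigr do rewrite mulr_suml.
under eq_bigr do under eq_bigr do rewrite exchange_big.
under eq_bigr do rewrite exchange_big.
rewrite exchange_big; apply eq_bigr=> x _.
rewrite exchange_big; apply eq_bigr=> j _.
rewrite exchange_big; apply eq_bigr=> k _.
rewrite mulr_sumr; apply eq_bigr=> i _; rewrite mxE; ring.
Qed.

Lemma adj2 p a q r (X : 'M[R]_(q, a)) (H : tensor R p a r) B :
  inner (md2 X H) B = inner H (md2 X^T B).
Proof.
rewrite /inner /tsum /md2; apply eq_bigr=> i _.
under eq_bigr do under eq_bigr do rewrite mulr_suml.
under eq_bigr do rewrite exchange_big.
rewrite exchange_big; apply eq_bigr=> x _.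
rewrite exchange_big; apply eq_bigr=> k _.
rewrite mulr_sumr; apply eq_bigr=> j _; rewrite mxE; ring.
Qed.

Lemma adj3 p a q r (X : 'M[R]_(r, a)) (H : tensor R p q a) B :
  inner (md3 X H) B = inner H (md3 X^T B).
Proof.
rewrite /inner /tsum /md3; apply eq_bigr=> i _; apply eq_bigr=> j _.
under eq_bigr do rewrite mulr_suml.
rewrite exchange_big; apply eq_bigr=> x _.
rewrite mulr_sumr; apply eq_bigr=> k _; rewrite mxE; ring.
Qed.

Lemma adj a b c p q r (X : 'M[R]_(a, p)) (Y : 'M[R]_(b, q)) (Z : 'M[R]_(c, r)) H B :
  inner (mmul X Y Z H) B = inner H (mmul X^T Y^T Z^T B).
Proof.
rewrite !mmul_md adj1 adj2 adj3 md12 md13 md23 //.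
Qed.

Lemma sqnorm_mmul a b c p q r (X : 'M[R]_(a, p)) (Y : 'M[R]_(b, q)) (Z : 'M[R]_(c, r)) H :
  Defs.orthonormal X -> Defs.orthonormal Y -> Defs.orthonormal Z ->
  sqnorm (mmul X Y Z H) = sqnorm H.
Proof.
move=> oX oY oZ; rewrite !sqnormE adj mmulM oX oY oZ mmul1 //.
Qed.


Lemma key k n p r (B : tensor R k k n) (X : 'M[R]_(k, p)) (Z : 'M[R]_(n, r)) H :
  Defs.orthonormal X -> Defs.orthonormal Z ->
  sqnorm (tsub B (mmul X X Z H)) =
  sqnorm B - sqnorm (contract B X X Z) + sqnorm (tsub (contract B X X Z) H).
Proof.
move=> oX oZ; rewrite !sqnorm_sub sqnorm_mmul // [inner B _]innerC adj.
rewrite -/(contract B X X Z) [inner (contract _ _ _ _) H]innerC.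
rewrite (sqnormE (contract B X X Z)). ring.
Qed.

Lemma phi_lb r3 k n (B : tensor R k k n) (U : 'M[R]_(k, 2)) (W : 'M[R]_(n, r3)) :
  @is_solution R 2 r3 k n B U W -> sqnorm B - sqnorm (contract B U U W) <= phi r3 B.
Proof.
move=> [oU oW opt]; apply lb_le_inf.
  exists (sqnorm (tsub B (mmul U U W (contract B U U W)))).
  by exists U, W, (contract B U U W).
move=> x [X [Z [H [oX oZ ->]]]]; rewrite key //.
have := opt X Z oX oZ; rewrite /frob ler_sqrt ?sqnorm_ge0 // => h.
have := sqnorm_ge0 (tsub (contract B X X Z) H); lra.
Qed.

Lemma phi_ub r3 k n (B : tensor R k k n) (X : 'M[R]_(k, 2)) (Z : 'M[R]_(n, r3)) H :
  Defs.orthonormal X -> Defs.orthonormal Z -> phi r3 B <= sqnorm (tsub B (mmul X X Z H)).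
Proof.
move=> oX oZ; apply ge_inf; last by exists X, Z, H.
by exists 0 => y [X' [Z' [H' [_ _ ->]]]]; apply sqnorm_ge0.
Qed.

Lemma orth1 k : Defs.orthonormal (1%:M : 'M[R]_k).
Proof. by rewrite /Defs.orthonormal trmx1 mulmx1. Qed.

Lemma sol_rot r3 k n (B : tensor R k k n) (U : 'M[R]_(k, 2)) (W : 'M[R]_(n, r3)) Q :
  @is_solution R 2 r3 k n B U W -> Defs.orthonormal Q -> @is_solution R 2 r3 k n B (U *m Q) W.
Proof.
move=> [oU oW opt] oQ; split => //.
  by rewrite /Defs.orthonormal trmx_mul mulmxA -(mulmxA Q^T) oU mulmx1.
move=> X Z oX oZ; have -> : contract B (U *m Q) (U *m Q) W =
   mmul Q^T Q^T 1%:M (contract B U U W).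
  by rewrite /contract mmulM -!trmx_mul mul1mx.
have oQt : Defs.orthonormal Q^T by rewrite /Defs.orthonormal trmxK; apply: mulmx1C; exact: oQ.
rewrite /frob sqnorm_mmul //; [exact: opt | exact: orth1].
Qed.

End Aux.

Section Block.
Variables (R : realType) (m1 m2 n : nat) (A1 : tensor R m1 m1 n) (A2 : tensor R m2 m2 n).
Local Notation A := (blockT A1 A2).

Lemma splitl (i : 'I_m1) : split (lshift m2 i) = inl i.
Proof. exact: (unsplitK (inl i : 'I_m1 + 'I_m2)). Qed.
Lemma splitr (i : 'I_m2) : split (rshift m1 i) = inr i.
Proof. exact: (unsplitK (inr i : 'I_m1 + 'I_m2)). Qed.

Lemma blk_ll i j k : A (lshift m2 i) (lshift m2 j) k = A1 i j k.
Proof. by rewrite /blockT !splitl. Qed.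
Lemma blk_rr i j k : A (rshift m1 i) (rshift m1 j) k = A2 i j k.
Proof. by rewrite /blockT !splitr. Qed.
Lemma blk_lr i j k : A (lshift m2 i) (rshift m1 j) k = 0.
Proof. by rewrite /blockT splitl splitr. Qed.
Lemma blk_rl i j k : A (rshift m1 i) (lshift m2 j) k = 0.
Proof. by rewrite /blockT splitl splitr. Qed.

Lemma sqnorm_blk : sqnorm A = sqnorm A1 + sqnorm A2.
Proof.
rewrite /sqnorm big_split_ord /=; congr (_ + _).
  apply eq_bigr => i _; rewrite big_split_ord /= [X in _ + X]big1 ?addr0.
    by apply eq_bigr => j _; apply eq_bigr => k _; rewrite blk_ll.
  by move=> j _; rewrite big1 // => k _; rewrite blk_lr expr2 mulr0.
apply eq_bigr => i _; rewrite big_split_ord /= [X in X + _]big1 ?add0r.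
  by apply eq_bigr => j _; apply eq_bigr => k _; rewrite blk_rr.
by move=> j _; rewrite big1 // => k _; rewrite blk_rl expr2 mulr0.
Qed.

Lemma sqnorm_self a b c (G : tensor R a b c) : sqnorm (tsub G G) = 0.
Proof.
rewrite /sqnorm big1 // => i _; rewrite big1 // => j _; rewrite big1 // => k _.
by rewrite /tsub subrr expr2 mulr0.
Qed.

Lemma block1_contra r3 (U : 'M[R]_(m1 + m2, 2)) (W : 'M[R]_(n, r3)) :
  @is_solution R 2 r3 (m1 + m2) n A U W ->
  (forall i c, U (rshift m1 i) c = 0) -> phi r3 A1 + sqnorm A2 <= phi r3 A.
Proof.
move=> sol hU; have [oU oW _] := sol.
pose X1 : 'M[R]_(m1, 2) := \matrix_(i, c) U (lshift m2 i) c.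
have oX1 : Defs.orthonormal X1.
  rewrite /Defs.orthonormal -oU; apply/matrixP => a b; rewrite !mxE.
  rewrite [in RHS]big_split_ord /= [X in _ = _ + X]big1 ?addr0.
    by apply eq_bigr => i _; rewrite !mxE.
  by move=> i _; rewrite !mxE hU mul0r.
have hc : contract A U U W = contract A1 X1 X1 W.
  apply funext => a; apply funext => b; apply funext => k.
  rewrite /contract /mmul big_split_ord /= [X in _ + X]big1 ?addr0; last first.
    by move=> al _; rewrite big1 // => be _; rewrite big1 // => ga _; rewrite mxE hU !mul0r.
  apply eq_bigr => al _; rewrite big_split_ord /= [X in _ + X]big1 ?addr0; last first.
    by move=> be _; rewrite big1 // => ga _; rewrite [U^T b _]mxE hU mulr0 !mul0r.
  by apply eq_bigr => be _; apply eq_bigr => ga _; rewrite !mxE blk_ll.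
have h1 := phi_lb sol; rewrite hc sqnorm_blk in h1.
have := phi_ub A1 (contract A1 X1 X1 W) oX1 oW.
rewrite key // sqnorm_self; lra.
Qed.

Lemma block2_contra r3 (U : 'M[R]_(m1 + m2, 2)) (W : 'M[R]_(n, r3)) :
  @is_solution R 2 r3 (m1 + m2) n A U W ->
  (forall i c, U (lshift m2 i) c = 0) -> phi r3 A2 + sqnorm A1 <= phi r3 A.
Proof.
move=> sol hU; have [oU oW _] := sol.
pose X1 : 'M[R]_(m2, 2) := \matrix_(i, c) U (rshift m1 i) c.
have oX1 : Defs.orthonormal X1.
  rewrite /Defs.orthonormal -oU; apply/matrixP => a b; rewrite !mxE.
  rewrite [in RHS]big_split_ord /= [X in _ = X + _]big1 ?add0r.
    by apply eq_bigr => i _; rewrite !mxE.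
  by move=> i _; rewrite !mxE hU mul0r.
have hc : contract A U U W = contract A2 X1 X1 W.
  apply funext => a; apply funext => b; apply funext => k.
  rewrite /contract /mmul big_split_ord /= [X in X + _]big1 ?add0r; last first.
    by move=> al _; rewrite big1 // => be _; rewrite big1 // => ga _; rewrite mxE hU !mul0r.
  apply eq_bigr => al _; rewrite big_split_ord /= [X in X + _]big1 ?add0r; last first.
    by move=> be _; rewrite big1 // => ga _; rewrite [U^T b _]mxE hU mulr0 !mul0r.
  by apply eq_bigr => be _; apply eq_bigr => ga _; rewrite !mxE blk_rr.
have h1 := phi_lb sol; rewrite hc sqnorm_blk in h1.
have := phi_ub A2 (contract A2 X1 X1 W) oX1 oW.
rewrite key // sqnorm_self; lra.
Qed.

Definition dsg (i : 'I_(m1 + m2)) : R := if split i is inl _ then 1 else -1.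
Definition Dm : 'M[R]_(m1 + m2) := diag_mx (\row_i dsg i).

Lemma dsg2 i : dsg i * dsg i = 1.
Proof. by rewrite /dsg; case: split => _; rewrite ?mulr1 ?mulrNN ?mulr1. Qed.

Lemma blk_d i j k : dsg i * (dsg j * A i j k) = A i j k.
Proof. by rewrite /dsg /blockT; case: split => ?; case: split => ?; ring. Qed.

Lemma D_sol r3 (U : 'M[R]_(m1 + m2, 2)) (W : 'M[R]_(n, r3)) :
  @is_solution R 2 r3 (m1 + m2) n A U W ->
  @is_solution R 2 r3 (m1 + m2) n A (Dm *m U) W.
Proof.
move=> [oU oW opt]; have DD : Dm^T *m Dm = 1%:M.
  apply/matrixP => i j; rewrite tr_diag_mx mul_diag_mx !mxE.
  by case: eqP => [->|_]; rewrite ?mulr1n ?dsg2 ?mulr0n ?mulr0.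
have hc : contract A (Dm *m U) (Dm *m U) W = contract A U U W.
  have hA : mmul Dm^T Dm^T 1%:M A = A.
    apply funext => i; apply funext => j; apply funext => k.
    rewrite mmul_md /md1 /md2 /md3 tr_diag_mx.
    under eq_bigr do under eq_bigr do rewrite sum_id.
    under eq_bigr do rewrite (sum_diag (\row_i0 dsg i0) j (fun x0 => A _ x0 k)).
    rewrite (sum_diag (\row_i0 dsg i0) i (fun x => _ * A x j k)).
    by rewrite !mxE blk_d.
  by rewrite /contract !trmx_mul -[in RHS]hA mmulM mulmx1.
split => //; last by move=> X Z oX oZ; rewrite hc; apply opt.
by rewrite /Defs.orthonormal trmx_mul mulmxA -(mulmxA U^T) DD mulmx1.
Qed.

End Block.

Section Two.
Variable R : realType.

Definition mk2 (a b c d : R) : 'M[R]_2 := \matrix_(i, j)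
  if i == ord0 then (if j == ord0 then a else b) else (if j == ord0 then c else d).

Lemma ord2P (i : 'I_2) : i = ord0 \/ i = ord_max.
Proof. by case: i => [[|[|i]] Hi]; [left; apply: val_inj|right; apply: val_inj|]. Qed.

Lemma mat2 (M : 'M[R]_2) : M = mk2 (M ord0 ord0) (M ord0 ord_max) (M ord_max ord0) (M ord_max ord_max).
Proof. by apply/matrixP => i j; rewrite mxE; case: (ord2P i) => ->; case: (ord2P j) => ->. Qed.

Lemma mk2_mul a b c d a' b' c' d' :
  mk2 a b c d *m mk2 a' b' c' d' =
  mk2 (a * a' + b * c') (a * b' + b * d') (c * a' + d * c') (c * b' + d * d').
Proof.
apply/matrixP => i j; rewrite !mxE !big_ord_recl big_ord0 !mxE addr0.
by case: (ord2P i) => ->; case: (ord2P j) => ->.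
Qed.

Lemma mk2_tr a b c d : (mk2 a b c d)^T = mk2 a c b d.
Proof. by apply/matrixP => i j; rewrite !mxE; case: (ord2P i) => ->; case: (ord2P j) => ->. Qed.

Lemma mk2_1 : (1%:M : 'M[R]_2) = mk2 1 0 0 1.
Proof. by apply/matrixP => i j; rewrite !mxE; case: (ord2P i) => ->; case: (ord2P j) => ->. Qed.

Definition erow (e0 e1 : R) : 'rV[R]_2 := \row_c (if c == ord0 then e0 else e1).

Lemma mk2_diag e0 e1 : diag_mx (erow e0 e1) = mk2 e0 0 0 e1.
Proof. by apply/matrixP => i j; rewrite !mxE; case: (ord2P i) => ->; case: (ord2P j) => ->. Qed.

Lemma mk2_inj a b c d a' b' c' d' : mk2 a b c d = mk2 a' b' c' d' ->
  [/\ a = a', b = b', c = c' & d = d'].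
Proof.
move=> h; have := congr1 (fun M : 'M[R]_2 => M ord0 ord0) h; have := congr1 (fun M : 'M[R]_2 => M ord0 ord_max) h.
have := congr1 (fun M : 'M[R]_2 => M ord_max ord0) h; have := congr1 (fun M : 'M[R]_2 => M ord_max ord_max) h.
by rewrite /= !mxE /=.
Qed.

Lemma two (Q : 'M[R]_2) : Q^T = Q -> Q^T *m Q = 1%:M ->
  exists (Rm : 'M[R]_2) (e0 e1 : R), [/\ Defs.orthonormal Rm,
    Q *m Rm = Rm *m diag_mx (erow e0 e1) &
    ((e0 = 1 /\ e1 = -1) \/ (e0 = 1 /\ e1 = 1) \/ (e0 = -1 /\ e1 = -1))].
Proof.
have [p [q [q' [r ->]]]] : exists p q q' r : R, Q = mk2 p q q' r.
  by exists (Q ord0 ord0), (Q ord0 ord_max), (Q ord_max ord0), (Q ord_max ord_max); exact: mat2.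
rewrite mk2_tr => /mk2_inj [_ hq _ _]; rewrite hq.
rewrite mk2_mul mk2_1 => /mk2_inj [h1 h2 _ h4].
rewrite /Defs.orthonormal.
have sq1 (x : R) : x * x = 1 -> x = 1 \/ x = -1.
  move=> hx; have : (x - 1) * (x + 1) == 0 by apply/eqP; ring: hx.
  by rewrite mulf_eq0 => /orP [/eqP hx1|/eqP hx1]; [left|right]; lra.
have [q0|qn0] := eqVneq q 0.
  rewrite q0 mulr0 ?addr0 ?add0r in h1 h4.
  have [p1|p1] := sq1 _ h1; have [r1|r1] := sq1 _ h4; rewrite q0 p1 r1.
  - exists 1%:M, 1, 1; split; last by right; left.
      by rewrite trmx1 mulmx1.
    by rewrite mk2_1 mk2_diag !mk2_mul; congr mk2; ring.
  - exists 1%:M, 1, (-1); split; last by left.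
      by rewrite trmx1 mulmx1.
    by rewrite mk2_1 mk2_diag !mk2_mul; congr mk2; ring.
  - exists (mk2 0 1 1 0), 1, (-1); split; last by left.
      by rewrite mk2_tr mk2_mul mk2_1; congr mk2; ring.
    by rewrite mk2_diag !mk2_mul; congr mk2; ring.
  - exists 1%:M, (-1), (-1); split; last by right; right.
      by rewrite trmx1 mulmx1.
    by rewrite mk2_1 mk2_diag !mk2_mul; congr mk2; ring.
have hr : r = - p.
  have : q * (p + r) == 0 by rewrite mulrDr [q * p]mulrC h2.
  by rewrite mulf_eq0 (negbTE qn0) /= => /eqP; lra.
pose t := (1 + p) ^+ 2 + q ^+ 2.
have tgt0 : 0 < t.
  have : 0 < q ^+ 2 by rewrite lt0r sqrf_eq0 qn0 sqr_ge0.
  by rewrite /t => hq2; have := sqr_ge0 (1 + p); lra.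
pose s := Num.sqrt t.
have s2 : s ^+ 2 = t by rewrite sqr_sqrtr // ltW.
have sn0 : s != 0 by rewrite /s gt_eqF // sqrtr_gt0.
exists (mk2 ((1 + p) / s) (- (q / s)) (q / s) ((1 + p) / s)), 1, (-1).
split; last by left.
  rewrite mk2_tr mk2_mul mk2_1; congr mk2.
  - transitivity (t / s ^+ 2); first by rewrite /t; field.
    by rewrite s2 divff // gt_eqF.
  - ring.
  - ring.
  - transitivity (t / s ^+ 2); first by rewrite /t; field.
    by rewrite s2 divff // gt_eqF.
rewrite mk2_diag !mk2_mul hr; congr mk2.
- apply/eqP; rewrite -subr_eq0; apply/eqP.
  transitivity ((p * p + q * q - 1) / s); first by field.
  by rewrite h1 subrr mul0r.
- ring.
- ring.
- apply/eqP; rewrite -subr_eq0; apply/eqP.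
  transitivity (- (p * p + q * q - 1) / s); first by field.
  by rewrite h1 subrr oppr0 mul0r.
Qed.

End Two.

Theorem proposition5p2 (R : realType) (m1 m2 n : nat)
  (A1 : tensor R m1 m1 n) (A2 : tensor R m2 m2 n) :
  sym12 (blockT A1 A2) -> nonneg (blockT A1 A2) ->
  irreducible A1 -> irreducible A2 ->
  forall r3 : nat, (r3 = 2%N \/ r3 = 1%N) ->
  phi r3 (blockT A1 A2) < phi r3 A1 + sqnorm A2 ->
  phi r3 (blockT A1 A2) < phi r3 A2 + sqnorm A1 ->
  @unique_solution R 2 r3 (m1 + m2) n (blockT A1 A2) ->
  exists (U : 'M[R]_(m1 + m2, 2)) (W : 'M[R]_(n, r3)),
    [/\ is_solution (blockT A1 A2) U W,
        (forall i : 'I_m1, U (lshift m2 i) ord_max = 0),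
        (forall i : 'I_m2, U (rshift m1 i) ord0 = 0) &
        (forall (a b : 'I_2) (k : 'I_r3), a != b ->
           contract (blockT A1 A2) U U W a b k = 0)].
Proof.
move=> _ _ _ _ r3 _ hlt1 hlt2 [[U [W sol]] uniq].
have solD := D_sol sol.
have [Q1 [Q3 [oQ1 _ hDU _]]] := uniq U W _ _ sol solD.
have [oU _ _] := sol.
have hQ : Q1 = U^T *m (Dm R m1 m2 *m U) by rewrite hDU mulmxA oU mul1mx.
have symQ : Q1^T = Q1 by rewrite hQ !trmx_mul trmxK /Dm tr_diag_mx -mulmxA.
have [Rm [e0 [e1 [oR hQR he]]]] := two symQ oQ1.
pose U0 := U *m Rm.
have sol0 : is_solution (blockT A1 A2) U0 W := sol_rot sol oR.
have hM : Dm R m1 m2 *m U0 = U0 *m diag_mx (erow e0 e1).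
  by rewrite /U0 mulmxA hDU -!mulmxA hQR.
have hD0 (i : 'I_(m1 + m2)) (c : 'I_2) : @dsg R m1 m2 i * U0 i c = U0 i c * (if c == ord0 then e0 else e1).
  have := congr1 (fun M : 'M[R]_(m1 + m2, 2) => M i c) hM.
  by rewrite /= /Dm mul_diag_mx mul_mx_diag !mxE.
have dl (i : 'I_m1) : @dsg R m1 m2 (lshift m2 i) = 1 by rewrite /dsg splitl.
have dr (i : 'I_m2) : @dsg R m1 m2 (rshift m1 i) = -1 by rewrite /dsg splitr.
clearbody U0.
case: he => [[he0 he1]|[[he0 he1]|[he0 he1]]].
- have z1 i : U0 (lshift m2 i) ord_max = 0.
    by have := hD0 (lshift m2 i) ord_max; rewrite dl he1 /=; lra.
  have z2 i : U0 (rshift m1 i) ord0 = 0.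
    by have := hD0 (rshift m1 i) ord0; rewrite dr he0 /=; lra.
  exists U0, W; split => // a b k hab.
  rewrite /contract /mmul big1 // => al _; rewrite big1 // => be _; rewrite big1 // => ga _.
  rewrite !mxE; rewrite -(splitK al) -(splitK be).
  case: (ord2P a) hab => ->; case: (ord2P b) => -> //= _.
  + case: (split al) => al' /=; case: (split be) => be' /=.
    * by rewrite z1 mulr0 !mul0r.
    * by rewrite blk_lr mulr0.
    * by rewrite z1 mulr0 !mul0r.
    * by rewrite z2 !mul0r.
  + case: (split al) => al' /=; case: (split be) => be' /=.
    * by rewrite z1 !mul0r.
    * by rewrite z1 !mul0r.
    * by rewrite blk_rl mulr0.
    * by rewrite z2 mulr0 !mul0r.
- have z i c : U0 (rshift m1 i) c = 0.
    have := hD0 (rshift m1 i) c; rewrite dr he0 he1; case: (c == ord0) => /=; lra.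
  have := block1_contra sol0 z; lra.
- have z i c : U0 (lshift m2 i) c = 0.
    have := hD0 (lshift m2 i) c; rewrite dl he0 he1; case: (c == ord0) => /=; lra.
  have := block2_contra sol0 z; lra.
Qed.
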